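(* Let $A$ be a non-negative $d\times d$ matrix and let $\Pi$ be a permutation matrix such that $\widetilde A=\Pi A\Pi^T$ is block upper triangular, with square diagonal blocks $\widetilde A_{1,1},\dots,\widetilde A_{m,m}$, blocks $\widetilde A_{i,j}$ for $i<j$ above the diagonal, and zero blocks below the diagonal. For each $i=1,\dots,m$, let $\widetilde X^{(i)}$ be a closest stable non-negative matrix to $\widetilde A_{i,i}$. In particular, $\widetilde X^{(i)}=\widetilde A_{i,i}$ if $\rho(\widetilde A_{i,i})\le1$. Let $\widetilde X$ be the block upper triangular matrix with diagonal blocks $\widetilde X^{(i)}$, blocks $\widetilde A_{i,j}$ above the diagonal ($i<j$), and zero blocks below the diagonal. Then $X=\Pi^T\widetilde X\Pi$ is a closest stable non-negative matrix to $A$.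
   Context: $\rho(\cdot)$ denotes spectral radius and $\|\cdot\|$ the Frobenius norm $\|X\|=\sqrt{\sum_{i,j}x_{ij}^2}$. A square matrix $X$ is called stable if $\rho(X)\le 1$. A closest stable non-negative matrix to a square matrix $B$ is a global minimizer of $\|X-B\|$ over all entrywise non-negative $X$ of the same size with $\rho(X)\le 1$. *)

(* Defs.v *)
(* Scalars live in an arbitrary numClosedFieldType C
   (e.g. algC, or complex numbers over a real closed field); real numbers are
   the elements x with x \is Num.real, and non-negative entries (0 <= x) are
   automatically real. Eigenvalues are taken in C, so the spectral radius is
   the usual one (max modulus of complex eigenvalues). *)
From HB Require Import structures.
From mathcomp Require Import all_boot all_order all_algebra all_fingroup.
Set Implicit Arguments. Unset Strict Implicit. Unset Printing Implicit Defensive.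
Import Order.TTheory GRing.Theory Num.Theory.
Local Open Scope ring_scope.

Section Defs.
Variable C : numClosedFieldType.

Definition nonneg_mx (m n : nat) (X : 'M[C]_(m, n)) : Prop :=
  forall i j, 0 <= X i j.

Definition stable_mx (n : nat) (X : 'M[C]_n) : Prop :=
  forall a : C, eigenvalue X a -> `|a| <= 1.

Definition frob (m n : nat) (X : 'M[C]_(m, n)) : C :=
  sqrtC (\sum_(i < m) \sum_(j < n) `|X i j| ^+ 2).

Definition closest_stable_nonneg (n : nat) (B X : 'M[C]_n) : Prop :=
  [/\ nonneg_mx X, stable_mx X &
      forall Y : 'M[C]_n, nonneg_mx Y -> stable_mx Y -> frob (X - B) <= frob (Y - B)].

(* principal submatrix of M on the index set S (indices in increasing order) *)
Definition blocksub (d : nat) (M : 'M[C]_d) (S : {set 'I_d}) : 'M[C]_#|S| :=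
  \matrix_(i, j) M (enum_val i) (enum_val j).

End Defs.

Definition blockset (d : nat) (blk : 'I_d -> nat) (b : nat) : {set 'I_d} :=
  [set k | blk k == b].

(* Main.v *)
Require Import Defs.
From HB Require Import structures.
From mathcomp Require Import all_boot all_order all_algebra all_fingroup.
From Stdlib Require Import Classical.
From mathcomp Require Import ring.
Import Order.TTheory GRing.Theory Num.Theory.
Local Open Scope ring_scope.

Module Aux.
Set Implicit Arguments. Unset Strict Implicit. Unset Printing Implicit Defensive.

Section RealPoly.
Variable C : numClosedFieldType.
Implicit Types p q : {poly C}.

Definition realp p := map_poly (@Num.conj C) p = p.

Lemma realp_horner p s : realp p -> s \is Num.real -> p.[s] \is Num.real.
Proof.
move=> rp rs; rewrite CrealE; apply/eqP.
rewrite -{2}(conj_Creal rs) -{2}rp. by rewrite horner_map.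
Qed.

Lemma realp_lead p : realp p -> lead_coef p \is Num.real.
Proof.
move=> rp; rewrite CrealE; apply/eqP.
by rewrite lead_coefE -coef_map rp -lead_coefE .
Qed.


Lemma realp_mulIf p q g : g != 0 -> realp g -> p = q * g -> realp p -> realp q.
Proof.
move=> g0 rg Dp rp; apply: (mulIf g0) => /=.
by rewrite -{1}rg -rmorphM /= -Dp rp.
Qed.

Lemma gen_pos (E : {poly C} -> C) :
  (forall p q, E (p * q) = E p * E q) ->
  (forall z, z \isn't Num.real -> 0 < E (('X - z%:P) * ('X - (z^*)%:P))) ->
  forall n p, (size p <= n)%N -> realp p -> p != 0 -> 0 < E (lead_coef p)%:P ->
  (forall z, z \is Num.real -> root p z -> 0 < E ('X - z%:P)) -> 0 < E p.
Proof.
move=> EM Epair; elim=> [|n IH] p.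
  by rewrite leqn0 size_poly_eq0 => /eqP-> _; rewrite eqxx.
move=> szp rp p0 Elc Eroot.
have [[z pz]|/negPn sz1] := altP (closed_rootP p); last first.
  have Dp : p = (lead_coef p)%:P.
    by rewrite lead_coefE (eqP sz1) -size1_polyC // (eqP sz1).
  by rewrite Dp.
have [zr|znr] := boolP (z \is Num.real).
  case/factor_theorem: (pz) => q Dp.
  have q0 : q != 0 by apply: contraNneq p0 => q0; rewrite Dp q0 mul0r.
  have rq : realp q.
    apply: (realp_mulIf (negbT (polyXsubC_eq0 z))) Dp rp.
    by rewrite /realp map_polyXsubC /= conj_Creal.
  have szq : size p = (size q).+1.
    by rewrite Dp size_Mmonic ?monicXsubC // size_XsubC addn2.
  have lcq : lead_coef p = lead_coef q by rewrite Dp lead_coef_Mmonic ?monicXsubC.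
  rewrite Dp EM mulr_gt0 ?Eroot //.
  apply: IH => //; first by rewrite -ltnS -szq.
    by rewrite -lcq.
  by move=> w wr qw; apply: Eroot => //; rewrite Dp rootM qw.
case/factor_theorem: (pz) => q1 Dp.
have pzc : root p z^*.
  apply/rootP; rewrite -rp horner_map /=.
  by move/rootP: pz => ->; rewrite rmorph0.
have zz : z^* != z by rewrite -CrealE.
have q1z : root q1 z^*.
  by move: pzc; rewrite Dp rootM root_XsubC (negbTE zz) orbF.
case/factor_theorem: q1z => q Dq1.
set g := ('X - z%:P) * ('X - (z^*)%:P).
have Dp' : p = q * g by rewrite Dp Dq1 -mulrA [('X - _) * _]mulrC.
have gm : g \is monic by rewrite monicMl ?monicXsubC.
have q0 : q != 0 by apply: contraNneq p0 => q0; rewrite Dp' q0 mul0r.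
have rq : realp q.
  apply: (realp_mulIf (monic_neq0 gm)) Dp' rp.
  rewrite /realp /g rmorphM /= !map_polyXsubC mulrC.
  by congr ((_ - _%:P) * (_ - _%:P)); exact: conjCK.
have szq : size p = (size q).+2.
  rewrite Dp' size_Mmonic // /g size_Mmonic ?monicXsubC ?polyXsubC_eq0 // !size_XsubC.
  by rewrite addn3.
have lcq : lead_coef p = lead_coef q by rewrite Dp' lead_coef_Mmonic.
rewrite Dp' EM mulr_gt0 ?Epair //.
apply: IH => //; first by rewrite -ltnS ltnW // -szq.
  by rewrite -lcq.
by move=> w wr qw; apply: Eroot => //; rewrite Dp' rootM qw.
Qed.


Lemma pair_pos (s z : C) : s \is Num.real -> z \isn't Num.real ->
  0 < (('X - z%:P) * ('X - (z^*)%:P)).[s].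
Proof.
move=> sr znr; rewrite hornerM !hornerXsubC.
have -> : s - z^* = (s - z)^* by rewrite rmorphB /= (conj_Creal sr).
rewrite mul_conjC_gt0 subr_eq0; apply: contraNneq znr => <-; exact: sr.
Qed.

Lemma pos_right p (s : C) : realp p -> p != 0 -> 0 < lead_coef p -> s \is Num.real ->
  (forall z, z \is Num.real -> root p z -> z < s) -> 0 < p.[s].
Proof.
move=> rp p0 lc sr hz.
apply: (@gen_pos (fun q => q.[s])) (leqnn _) (rp) (p0) _ _.
- by move=> q r; rewrite hornerM.
- by move=> z znr; apply: pair_pos.
- by rewrite hornerC.
- by move=> z zr pz; rewrite hornerXsubC subr_gt0 hz.
Qed.

Lemma pos_between p (a b : C) : realp p -> p != 0 -> a \is Num.real -> b \is Num.real ->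
  a <= b -> (forall z, z \is Num.real -> root p z -> (z < a) || (b < z)) ->
  0 < p.[a] * p.[b].
Proof.
move=> rp p0 ar br ab hz.
apply: (@gen_pos (fun q => q.[a] * q.[b])) (leqnn _) (rp) (p0) _ _.
- by move=> q r; rewrite !hornerM mulrACA.
- by move=> z znr; rewrite mulr_gt0 ?pair_pos.
- rewrite !hornerC; have -> : lead_coef p * lead_coef p = lead_coef p * (lead_coef p)^* by rewrite (conj_Creal (realp_lead rp)).
  by rewrite mul_conjC_gt0 lead_coef_eq0.
- move=> z zr pz; rewrite !hornerXsubC; case/orP: (hz z zr pz) => h.
    by apply: mulr_gt0; rewrite subr_gt0 // (lt_le_trans h).
  by rewrite -mulrNN !opprB; apply: mulr_gt0; rewrite subr_gt0 // (le_lt_trans ab).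
Qed.


Lemma gap (rs : seq C) (r : C) : exists2 e, 0 < e &
  forall z, z \in rs -> z \is Num.real -> r < z -> r + e <= z.
Proof.
elim: rs => [|x rs [e e0 He]]; first by exists 1.
have [/andP[xr rx]|hx] := boolP ((x \is Num.real) && (r < x)).
  have xrr : x - r \is Num.real by rewrite gtr0_real // subr_gt0.
  have [le|lt] := real_leP xrr (gtr0_real e0).
    exists (x - r); first by rewrite subr_gt0.
    move=> z; rewrite inE => /orP[/eqP->|zin] zr rz; first by rewrite addrC subrK.
    by rewrite addrC subrK (le_trans _ (He z zin zr rz)) // -lerBlDl.
  exists e => // z; rewrite inE => /orP[/eqP->|zin] zr rz; last exact: He.
  by rewrite -lerBrDl ltW.
exists e => // z; rewrite inE => /orP[/eqP->|zin] zr rz; last exact: He.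
by rewrite zr rz in hx.
Qed.

Lemma maxroot (rs : seq C) (t : C) :
  (exists2 z, z \in rs & (z \is Num.real) && (t <= z)) ->
  exists r, [/\ r \in rs, r \is Num.real, t <= r &
     forall z, z \in rs -> z \is Num.real -> t <= z -> z <= r].
Proof.
elim: rs => [|x rs IH] [w]; first by rewrite in_nil.
rewrite inE => win wP.
have [hrs|hrs] := boolP (has (fun z => (z \is Num.real) && (t <= z)) rs).
  have [r [rin rr tr rmax]] : exists r, [/\ r \in rs, r \is Num.real, t <= r &
     forall z, z \in rs -> z \is Num.real -> t <= z -> z <= r].
    by apply: IH; case/hasP: hrs => z zin zP; exists z.
  have [/andP[xr tx]|hx] := boolP ((x \is Num.real) && (t <= x)).
    have [xle|rlt] := real_leP xr rr.
      exists r; split => //; first by rewrite inE rin orbT.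
      by move=> z; rewrite inE => /orP[/eqP->|zin] //; apply: rmax.
    exists x; split => //; try by rewrite inE eqxx.
    move=> z; rewrite inE => /orP[/eqP->|zin] // zr tz.
    by rewrite (le_trans (rmax z zin zr tz)) // ltW.
  exists r; split => //; first by rewrite inE rin orbT.
  move=> z; rewrite inE => /orP[/eqP->|zin] zr tz; last exact: rmax.
  by rewrite zr tz in hx.
have xw : w = x.
  case/orP: win => [/eqP//|win]; case/hasP: hrs; by exists w.
subst w; case/andP: wP => xr tx.
exists x; split => //; try by rewrite inE eqxx.
move=> z; rewrite inE => /orP[/eqP->|zin] // zr tz.
by case/hasP: hrs; exists z => //; rewrite zr tz.
Qed.

Lemma roots_in p : p != 0 -> exists rs : seq C, forall z, root p z -> z \in rs.
Proof.
move=> p0; have [rs Dp] := closed_field_poly_normal p.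
exists rs => z; rewrite {1}Dp rootZ ?lead_coef_eq0 //.
by rewrite root_prod_XsubC.
Qed.

Lemma cont_right q (r : C) : realp q -> r \is Num.real ->
  (forall s, s \is Num.real -> r < s -> 0 <= q.[s]) -> 0 <= q.[r].
Proof.
move=> rq rr hs; have qr := realp_horner rq rr.
rewrite real_leNgt ?real0 //; apply/negP => qneg.
have q0 : q != 0 by apply: contraTneq qneg => ->; rewrite horner0 ltxx.
have [rs Hrs] := roots_in q0.
have [e e0 He] := gap rs r.
pose s := r + e / 2%:R.
have e2 : 0 < e / 2%:R by rewrite divr_gt0 // ltr0n.
have rs' : r < s by rewrite /s ltrDl.
have sr : s \is Num.real by rewrite realD // gtr0_real.
have se : s < r + e by rewrite /s ltrD2l ltr_pdivrMr ?ltr0n // ltr_pMr ?ltr1n.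
have h : 0 < q.[r] * q.[s].
  apply: pos_between => //; first exact: ltW.
  move=> z zr qz; have [zlt|zgt|zeq] := real_ltgtP zr rr.
  - by [].
  - by rewrite /= (lt_le_trans se (He z (Hrs z qz) zr zgt)).
  - by move: qz; rewrite zeq => /rootP qz0; rewrite qz0 ltxx in qneg.
have := mulr_le0_ge0 (ltW qneg) (hs s sr rs').
by rewrite lt_geF.
Qed.

End RealPoly.

Section Mx.
Variable C : numClosedFieldType.

Definition rmx m n (M : 'M[C]_(m, n)) := map_mx (@Num.conj C) M = M.

Lemma nonneg_rmx m n (M : 'M[C]_(m, n)) : nonneg_mx M -> rmx M.
Proof.
by move=> nM; apply/matrixP => i j; rewrite mxE conj_Creal // ger0_real.
Qed.

Lemma eval_cpm n (Y : 'M[C]_n) s :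
  map_mx (horner_eval s) (char_poly_mx Y) = s%:M - Y.
Proof.
apply/matrixP => i j; rewrite !mxE /= horner_evalE.
by rewrite hornerD hornerN hornerMn hornerX hornerC.
Qed.

Lemma det_eval n (Y : 'M[C]_n) s : \det (s%:M - Y) = (char_poly Y).[s].
Proof. by rewrite -eval_cpm det_map_mx. Qed.

Lemma adj_eval n (Y : 'M[C]_n) s i j :
  \adj (s%:M - Y) i j = (\adj (char_poly_mx Y) i j).[s].
Proof. by rewrite -eval_cpm -map_mx_adj mxE. Qed.

Lemma realp_char n (Y : 'M[C]_n) : rmx Y -> realp (char_poly Y).
Proof. by move=> rY; rewrite /realp map_char_poly rY. Qed.

Lemma realp_adj n (Y : 'M[C]_n) i j : rmx Y -> realp (\adj (char_poly_mx Y) i j).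
Proof.
move=> rY; rewrite /realp.
transitivity ((map_mx (map_poly (@Num.conj C)) (\adj (char_poly_mx Y))) i j).
  by rewrite [RHS]mxE.
by rewrite map_mx_adj map_char_poly_mx rY.
Qed.

End Mx.

Lemma det_block1 (R : idomainType) n (M : 'M[R]_(1 + n)) :
  \det (drsubmx M) != 0 ->
  \det M = ulsubmx M 0 0 * \det (drsubmx M)
           - (ursubmx M *m \adj (drsubmx M) *m dlsubmx M) 0 0.
Proof.
move=> d0.
set N := drsubmx M; set d := \det N.
pose Q := block_mx (d%:M : 'M_1) 0 (- (\adj N *m dlsubmx M)) (1%:M : 'M_n).
have detQ : \det Q = d by rewrite det_lblock det1 mulr1 det_mx11 mxE.
have MQ : M *m Q = block_mx (d *: ulsubmx M - ursubmx M *m \adj N *m dlsubmx M)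
                      (ursubmx M) 0 N.
  rewrite -[M in M *m Q]submxK mulmx_block -/N.
  rewrite !mulmx0 !mulmx1 !add0r !mul_mx_scalar !mulmxN !mulmxA mul_mx_adj.
  by rewrite mul_scalar_mx subrr.
have := congr1 determinant MQ.
rewrite det_mulmx detQ det_ublock det_mx11 -/d !mxE => /(mulIf d0).
by rewrite mulrC.
Qed.

Section Eval.
Variable C : numClosedFieldType.

Lemma drsub_cpm n (Y : 'M[C]_(1 + n)) :
  drsubmx (char_poly_mx Y) = char_poly_mx (drsubmx Y).
Proof. by apply/matrixP => i j; rewrite !mxE eq_rshift. Qed.

Lemma ursub_eval n (Y : 'M[C]_(1 + n)) s :
  map_mx (horner_eval s) (ursubmx (char_poly_mx Y)) = - ursubmx Y.
Proof.
apply/matrixP => i j; rewrite !mxE eq_lrshift /= horner_evalE.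
by rewrite mulr0n sub0r hornerN hornerC.
Qed.

Lemma dlsub_eval n (Y : 'M[C]_(1 + n)) s :
  map_mx (horner_eval s) (dlsubmx (char_poly_mx Y)) = - dlsubmx Y.
Proof.
apply/matrixP => i j; rewrite !mxE eq_rlshift /= horner_evalE.
by rewrite mulr0n sub0r hornerN hornerC.
Qed.

Lemma det_block_eval n (Y : 'M[C]_(1 + n)) s :
  \det (s%:M - Y) = (s - ulsubmx Y 0 0) * \det (s%:M - drsubmx Y)
     - (ursubmx Y *m \adj (s%:M - drsubmx Y) *m dlsubmx Y) 0 0.
Proof.
have h := @det_block1 _ _ (char_poly_mx Y).
rewrite drsub_cpm in h.
have := congr1 (horner_eval s) (h (monic_neq0 (char_poly_monic _))).
rewrite -det_map_mx eval_cpm => ->.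
rewrite rmorphB rmorphM /= -det_map_mx eval_cpm.
have E (A : 'M[{poly C}]_1) : horner_eval s (A 0 0) = (map_mx (horner_eval s) A) 0 0.
  by rewrite mxE.
rewrite !E !map_mxM map_mx_adj eval_cpm ursub_eval dlsub_eval mulNmx mulNmx mulmxN opprK.
congr (_ * _ - _); rewrite !mxE eqxx /= horner_evalE.
by rewrite hornerD hornerN hornerMn hornerX hornerC mulr1n.
Qed.

End Eval.

Lemma block_inv (F : fieldType) n (a s b : F) (B : 'M_(1,n)) (Cc : 'M_(n,1))
   (N Ni : 'M_n) :
  N *m Ni = 1%:M -> B *m Ni *m Cc = b%:M -> s = a - b -> s != 0 ->
  (block_mx (a%:M : 'M_1) (- B) (- Cc) N) *m
  (block_mx (s^-1%:M) (s^-1 *: (B *m Ni)) (s^-1 *: (Ni *m Cc))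
            (Ni + s^-1 *: (Ni *m Cc *m B *m Ni))) = 1%:M.
Proof.
move=> NNi K Ds s0.
rewrite mulmx_block [RHS]scalar_mx_block.
congr block_mx.
- rewrite mul_scalar_mx scale_scalar_mx mulNmx -scalemxAr !mulmxA K.
  rewrite scale_scalar_mx -raddfB /=; congr (_%:M); rewrite mulrC -mulrBr -Ds mulVf //. 
- rewrite mul_scalar_mx scalerA mulNmx mulmxDr -!scalemxAr !mulmxA K.
  rewrite mul_scalar_mx -scalemxAl scalerA.
  rewrite -[X in _ - (X + _)]scale1r -scalerDl -scalerBl.
  have -> : a / s - (1 + s^-1 * b) = 0.
    by move: s0; rewrite Ds => s0; field.
  by rewrite scale0r.
- by rewrite mul_mx_scalar -scalemxAr mulmxA NNi mul1mx scalerN addNr.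
- rewrite mulmxDr -!scalemxAr !mulmxA NNi !mul1mx mulNmx mulNmx scalerN.
  by rewrite addrCA addNr addr0.
Qed.

Section KT.
Variable C : numClosedFieldType.

Definition Hpos n (Y : 'M[C]_n) t :=
  forall s, s \is Num.real -> t <= s -> 0 < \det (s%:M - Y).

Lemma ulsub_scal n (Y : 'M[C]_(1 + n)) t :
  ulsubmx (t%:M - Y) = (t - ulsubmx Y 0 0)%:M.
Proof.
by apply/matrixP => i j; rewrite !mxE eq_lshift !ord1 eqxx !mulr1n.
Qed.
Lemma ursub_scal n (Y : 'M[C]_(1 + n)) t : ursubmx (t%:M - Y) = - ursubmx Y.
Proof. by apply/matrixP => i j; rewrite !mxE eq_lrshift mulr0n sub0r. Qed.
Lemma dlsub_scal n (Y : 'M[C]_(1 + n)) t : dlsubmx (t%:M - Y) = - dlsubmx Y.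
Proof. by apply/matrixP => i j; rewrite !mxE eq_rlshift mulr0n sub0r. Qed.
Lemma drsub_scal n (Y : 'M[C]_(1 + n)) t : drsubmx (t%:M - Y) = t%:M - drsubmx Y.
Proof. by apply/matrixP => i j; rewrite !mxE eq_rshift. Qed.

Lemma nonneg_mulmx m n p (A : 'M[C]_(m, n)) (B : 'M[C]_(n, p)) :
  nonneg_mx A -> nonneg_mx B -> nonneg_mx (A *m B).
Proof.
move=> nA nB i j; rewrite mxE; apply: sumr_ge0 => k _; exact: mulr_ge0.
Qed.


Lemma nonneg_block m1 m2 n1 n2 (A : 'M[C]_(m1, n1)) (B : 'M[C]_(m1, n2))
  (D : 'M[C]_(m2, n1)) (E : 'M[C]_(m2, n2)) :
  nonneg_mx A -> nonneg_mx B -> nonneg_mx D -> nonneg_mx E ->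
  nonneg_mx (block_mx A B D E).
Proof.
move=> nA nB nD nE i j.
case: (split_ordP i) => i' ->; case: (split_ordP j) => j' ->.
- by rewrite block_mxEul.
- by rewrite block_mxEur.
- by rewrite block_mxEdl.
- by rewrite block_mxEdr.
Qed.

Lemma KT_step n
  (IH : forall D : 'M[C]_n, nonneg_mx D -> forall t, t \is Num.real ->
          Hpos D t -> nonneg_mx (\adj (t%:M - D)))
  (Y : 'M[C]_(1 + n)) : nonneg_mx Y -> forall t, t \is Num.real ->
  Hpos Y t -> nonneg_mx (\adj (t%:M - Y)).
Proof.
move=> nY t tr HY.
set D := drsubmx Y; set B := ursubmx Y; set Cc := dlsubmx Y; set y := ulsubmx Y 0 0.
have nD : nonneg_mx D by move=> i j; rewrite !mxE; apply: nY.
have nB : nonneg_mx B by move=> i j; rewrite !mxE; apply: nY.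
have nCc : nonneg_mx Cc by move=> i j; rewrite !mxE; apply: nY.
have rD : rmx D := nonneg_rmx nD.
have rfD := realp_char rD.
have fD0 : char_poly D != 0 := monic_neq0 (char_poly_monic D).
have lcD : 0 < lead_coef (char_poly D) by rewrite (monicP (char_poly_monic D)) ltr01.
have HD : Hpos D t.
  move=> s sr ts.
  have dr : \det (s%:M - D) \is Num.real by rewrite det_eval realp_horner.
  rewrite real_ltNge ?real0 //; apply/negP => hle.
  have [z [zr zroot sz]] : exists z, [/\ z \is Num.real, root (char_poly D) z & s <= z].
    apply: NNPP => hno.
    have : 0 < (char_poly D).[s].
      apply: pos_right => // z zr rz; rewrite real_ltNge //; apply/negP => szz.
      by apply: hno; exists z.
    by rewrite -det_eval => h; rewrite (lt_geF h) in hle.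
  have [rs Hrs] := roots_in fD0.
  have wit : exists2 w, w \in [seq w <- rs | root (char_poly D) w] &
                        (w \is Num.real) && (t <= w).
    by exists z; rewrite ?mem_filter ?zroot ?Hrs ?zr ?(le_trans ts sz).
  have [r [rin rr tr' rmax]] := maxroot wit.
  have rroot : root (char_poly D) r by move: rin; rewrite mem_filter => /andP[].
  have Hs' : forall s', s' \is Num.real -> r < s' -> Hpos D s'.
    move=> s' s'r rs' u ur s'u; rewrite det_eval.
    apply: pos_right => // w wr rw.
    have [tw|wt] := real_leP tr wr.
      apply: (le_lt_trans (rmax w _ wr tw)); first by rewrite mem_filter rw Hrs.
      exact: (lt_le_trans rs').
    apply: (lt_le_trans wt); apply: (le_trans tr'); apply: ltW.
    exact: (lt_le_trans rs' s'u).
  have adjr : forall i j, 0 <= \adj (r%:M - D) i j.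
    move=> i j; rewrite adj_eval; apply: cont_right => //; first exact: realp_adj.
    by move=> s' s'r rs'; rewrite -adj_eval; apply: (IH D nD s' s'r (Hs' s' s'r rs')).
  have := HY r rr tr'.
  rewrite det_block_eval -/D -/B -/Cc det_eval (rootP rroot) mulr0 sub0r oppr_gt0.
  have h1 : 0 <= (B *m \adj (r%:M - D) *m Cc) 0 0.
    by apply: nonneg_mulmx => //; apply: nonneg_mulmx.
  by move=> h2; rewrite (lt_geF h2) in h1.
have adjN := IH D nD t tr HD.
set N := t%:M - D.
have d0 : 0 < \det N by apply: HD.
have D0 : 0 < \det (t%:M - Y) by apply: HY.
set Ni := (\det N)^-1 *: \adj N.
have NNi : N *m Ni = 1%:M.
  by rewrite /Ni -scalemxAr mul_mx_adj scale_scalar_mx mulVf // lt0r_neq0.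
have nNi : nonneg_mx Ni by move=> i j; rewrite mxE mulr_ge0 // invr_ge0 ltW.
set b := (B *m Ni *m Cc) 0 0.
have K : B *m Ni *m Cc = b%:M by apply: mx11_scalar.
have nb : 0 <= b by apply: nonneg_mulmx => //; apply: nonneg_mulmx.
set a := t - y.
have Ddet : \det (t%:M - Y) = \det N * (a - b).
  rewrite det_block_eval -/D -/B -/Cc -/N -/y -/a.
  have -> : B *m \adj N *m Cc = (\det N) *: (B *m Ni *m Cc).
    rewrite /Ni -scalemxAr -scalemxAl scalerA mulfV ?scale1r //.
    exact: lt0r_neq0.
  by rewrite K !mxE eqxx mulr1n mulrBr mulrC.
set s := a - b.
have s0 : 0 < s by rewrite -(pmulr_rgt0 _ d0) -Ddet.
pose P := block_mx (s^-1%:M : 'M_1) (s^-1 *: (B *m Ni)) (s^-1 *: (Ni *m Cc))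
            (Ni + s^-1 *: (Ni *m Cc *m B *m Ni)).
have MP : (t%:M - Y) *m P = 1%:M.
  rewrite -[t%:M - Y]submxK ulsub_scal ursub_scal dlsub_scal drsub_scal.
  rewrite -/D -/B -/Cc -/y -/N.
  by apply: (block_inv NNi K) => //; exact: lt0r_neq0.
have adjE : \adj (t%:M - Y) = \det (t%:M - Y) *: P.
  by rewrite -[\adj _]mulmx1 -MP mulmxA mul_adj_mx mul_scalar_mx.
have si : 0 <= s^-1 by rewrite invr_ge0 ltW.
have nP : nonneg_mx P.
  apply: nonneg_block.
  - by move=> i j; rewrite mxE mulrn_wge0.
  - by move=> i j; rewrite mxE mulr_ge0 //; apply: nonneg_mulmx.
  - by move=> i j; rewrite mxE mulr_ge0 //; apply: nonneg_mulmx.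
  - move=> i j; rewrite mxE addr_ge0 //.
    rewrite mxE mulr_ge0 //.
    by do 3 (apply: nonneg_mulmx => //).
move=> i j; rewrite adjE mxE mulr_ge0 //; exact: ltW.
Qed.

Lemma KT n (Y : 'M[C]_n) : nonneg_mx Y -> forall t, t \is Num.real ->
  Hpos Y t -> nonneg_mx (\adj (t%:M - Y)).
Proof.
elim: n Y => [|n IH] Y; first by move=> _ t _ _ [].
exact: (@KT_step n IH Y).
Qed.

End KT.

Section Key.
Variable C : numClosedFieldType.

Lemma sum_delta (I : finType) (x : I) (F : I -> C) :
  \sum_k (x == k)%:R * F k = F x.
Proof.
rewrite (bigD1 x) //= eqxx mul1r big1 ?addr0 // => k /negbTE.
by rewrite eq_sym => ->; rewrite mul0r.
Qed.

Lemma Hpos_stable n (Y : 'M[C]_n) t : nonneg_mx Y -> stable_mx Y ->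
  t \is Num.real -> 1 < t -> Hpos Y t.
Proof.
move=> nY sY tr t1 s sr ts; rewrite det_eval.
apply: pos_right => //.
- exact: realp_char (nonneg_rmx nY).
- exact: monic_neq0 (char_poly_monic Y).
- by rewrite (monicP (char_poly_monic Y)) ltr01.
- move=> z zr rz; have ez : eigenvalue Y z by rewrite eigenvalue_root_char.
  have := sY z ez => hz.
  apply: (le_lt_trans (real_ler_norm zr)); apply: (le_lt_trans hz).
  exact: (lt_le_trans t1 ts).
Qed.

Lemma stable_principal d (Y : 'M[C]_d) (S : {set 'I_d}) :
  nonneg_mx Y -> stable_mx Y -> stable_mx (blocksub Y S).
Proof.
move=> nY sY mu /eigenvalueP [u uB u0].
rewrite real_leNgt ?normr_real ?real1 //; apply/negP => mu1.
set t := `|mu|.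
have tr : t \is Num.real by apply: normr_real.
pose w i := `|u 0 i|.
have w0 i : 0 <= w i by apply: normr_ge0.
have ineq1 j : t * w j <= \sum_i w i * blocksub Y S i j.
  rewrite /t /w -normrM.
  have -> : mu * u 0 j = (u *m blocksub Y S) 0 j by rewrite uB mxE.
  rewrite mxE; apply: (le_trans (ler_norm_sum _ _ _)).
  by apply: ler_sum => i _; rewrite normrM [`|blocksub _ _ _ _|]ger0_norm // mxE.
pose W : 'rV[C]_d := \row_k \sum_i (enum_val i == k)%:R * w i.
have W0 k : 0 <= W 0 k.
  by rewrite mxE; apply: sumr_ge0 => i _; rewrite mulr_ge0 ?ler0n.
have Wev j : W 0 (enum_val j) = w j.
  rewrite mxE (eq_bigr (fun i => (j == i)%:R * w i)) ?sum_delta // => i _.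
  by rewrite (inj_eq enum_val_inj) eq_sym.
have WY l : (W *m Y) 0 l = \sum_i w i * Y (enum_val i) l.
  rewrite mxE (eq_bigr (fun k => \sum_i (enum_val i == k)%:R * (w i * Y k l))); last first.
    by move=> k _; rewrite mxE mulr_suml; apply: eq_bigr => i _; rewrite mulrA.
  rewrite exchange_big /=; apply: eq_bigr => i _.
  rewrite (eq_bigr (fun k => (enum_val i == k)%:R * (fun k => w i * Y k l) k)) //.
  by rewrite sum_delta.
have ineq2 l : t * W 0 l <= (W *m Y) 0 l.
  have [lS|lS] := boolP (l \in S).
    rewrite -(enum_rankK_in lS lS) Wev WY.
    apply: (le_trans (ineq1 _)); apply: ler_sum => i _; by rewrite mxE.
  have -> : W 0 l = 0.
    rewrite mxE big1 // => i _.
    have : enum_val i \in S by apply: enum_valP.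
    by case: eqP => [->|]; rewrite ?(negbTE lS) // mul0r.
  rewrite mulr0 WY; apply: sumr_ge0 => i _; exact: mulr_ge0.
set M := t%:M - Y.
have HY : Hpos Y t by apply: Hpos_stable.
have nadj := KT nY tr HY.
have dM : 0 < \det M by apply: HY.
have WM k : (W *m M) 0 k <= 0.
  rewrite /M mulmxBr mul_mx_scalar mxE [(t *: W) 0 k]mxE [X in _ + X]mxE subr_le0; exact: ineq2.
have E : (W *m M) *m \adj M = \det M *: W by rewrite -mulmxA mul_mx_adj mul_mx_scalar.
have Wz l : W 0 l = 0.
  apply/eqP; rewrite eq_le; apply/andP; split; last exact: W0.
  rewrite -(pmulr_rle0 _ dM).
  have -> : \det M * W 0 l = ((W *m M) *m \adj M) 0 l by rewrite E [RHS]mxE.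
  rewrite mxE; apply: sumr_le0 => k _; apply: mulr_le0_ge0 => //; exact: nadj.
apply/negP: u0; rewrite negbK; apply/eqP/matrixP => i j.
rewrite ord1 mxE; apply/eqP; rewrite -normr_eq0 -/(w j) -Wev Wz //.
Qed.

End Key.

Section Perm.
Variable C : numClosedFieldType.

Lemma perm_entry n (p q : 'S_n) (M : 'M[C]_n) i j :
  (perm_mx p *m M *m perm_mx q) i j = M (p i) ((q^-1)%g j).
Proof. by rewrite -row_permE -[q in perm_mx q]invgK -col_permE !mxE. Qed.

Definition cj n (p : 'S_n) (M : 'M[C]_n) := perm_mx p *m M *m perm_mx (p^-1)%g.

Lemma cj_entry n (p : 'S_n) (M : 'M[C]_n) i j : cj p M i j = M (p i) (p j).
Proof. by rewrite /cj perm_entry invgK. Qed.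

Lemma cjK n (p : 'S_n) (M : 'M[C]_n) : cj (p^-1)%g (cj p M) = M.
Proof. by apply/matrixP => i j; rewrite !cj_entry !permKV. Qed.

Lemma cjB n (p : 'S_n) (M N : 'M[C]_n) : cj p (M - N) = cj p M - cj p N.
Proof. by rewrite /cj mulmxBr mulmxBl. Qed.

Lemma nonneg_cj n (p : 'S_n) (M : 'M[C]_n) : nonneg_mx M -> nonneg_mx (cj p M).
Proof. by move=> nM i j; rewrite cj_entry. Qed.

Lemma frob_cj n (p : 'S_n) (M : 'M[C]_n) : frob (cj p M) = frob M.
Proof.
rewrite /frob; congr sqrtC.
rewrite [RHS](reindex_inj (@perm_inj _ p)); apply: eq_bigr => i _.
rewrite [RHS](reindex_inj (@perm_inj _ p)); apply: eq_bigr => j _.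
by rewrite cj_entry.
Qed.

Lemma stable_cj n (p : 'S_n) (M : 'M[C]_n) : stable_mx M -> stable_mx (cj p M).
Proof.
move=> sM a /eigenvalueP [v vM v0]; apply: sM; apply/eigenvalueP.
exists (v *m perm_mx p).
  have E : perm_mx p *m M = cj p M *m perm_mx p.
    by rewrite /cj -mulmxA -perm_mxM mulVg perm_mx1 mulmx1.
  by rewrite -mulmxA E mulmxA vM scalemxAl.
apply: contraNneq v0 => h.
by rewrite -[v]mulmx1 -(perm_mx1 C n) -(mulgV p) perm_mxM mulmxA h mul0mx.
Qed.

End Perm.

Section Blocks.
Variable C : numClosedFieldType.

Lemma stable_blocktri d (blk : 'I_d -> nat) (Xt : 'M[C]_d) :
  (forall k l, (blk l < blk k)%N -> Xt k l = 0) ->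
  (forall b, stable_mx (blocksub Xt (blockset blk b))) -> stable_mx Xt.
Proof.
move=> low sb a /eigenvalueP [v vX v0].
have ex : exists b, [exists k, (v 0 k != 0) && (blk k == b)].
  case: (boolP [exists k, v 0 k != 0]) => [/existsP[k vk]|/existsPn h].
    by exists (blk k); apply/existsP; exists k; rewrite vk eqxx.
  case/negP: v0; apply/eqP/matrixP => i k; rewrite ord1 mxE.
  by have := h k; rewrite negbK => /eqP.
case: (ex_minnP ex) => b0 /existsP[k0 /andP[vk0 /eqP bk0]] bmin.
have vanish k : (blk k < b0)%N -> v 0 k = 0.
  move=> hk; apply/eqP; apply: contraTT hk => vk; rewrite -leqNgt.
  by apply: bmin; apply/existsP; exists k; rewrite vk eqxx.
set S := blockset blk b0.
have k0S : k0 \in S by rewrite inE bk0.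
apply: (sb b0 a); apply/eigenvalueP.
exists (\row_i v 0 (enum_val i)).
  apply/matrixP => i j; rewrite !mxE.
  have := congr1 (fun M : 'rV[C]_d => M 0 (enum_val j)) vX; rewrite !mxE => <-.
  rewrite [RHS](bigID (fun l => l \in S)) /= [X in _ = _ + X]big1 ?addr0.
    rewrite [RHS]big_enum_val; apply: eq_bigr => k _; by rewrite !mxE.
  move=> l lS.
  have bj : blk (enum_val j) = b0.
    by have := enum_valP j; rewrite inE => /eqP.
  have bl : blk l != b0 by move: lS; rewrite inE.
  case: (ltngtP (blk l) b0) => hl.
  - by rewrite vanish // mul0r.
  - by rewrite low ?mulr0 // bj.
  - by rewrite hl eqxx in bl.
apply/negP => /eqP u0.
have := congr1 (fun M : 'rV[C]_#|S| => M 0 (enum_rank_in k0S k0)) u0.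
by rewrite !mxE enum_rankK_in // => h; rewrite h eqxx in vk0.
Qed.

Lemma blk_sum d (S : {set 'I_d}) (H : 'I_d -> 'I_d -> C) :
  \sum_(i < #|S|) \sum_(j < #|S|) H (enum_val i) (enum_val j) =
  \sum_(k in S) \sum_(l in S) H k l.
Proof.
rewrite [RHS]big_enum_val; apply: eq_bigr => i _; by rewrite [RHS]big_enum_val.
Qed.

Lemma sum_blocks d (blk : 'I_d -> nat) N (H : 'I_d -> 'I_d -> C) :
  (forall k, (blk k < N)%N) ->
  \sum_k \sum_(l | blk k == blk l) H k l =
  \sum_(b < N) \sum_(k in blockset blk b) \sum_(l in blockset blk b) H k l.
Proof.
move=> hN.
rewrite [RHS](eq_bigr (fun b : 'I_N => \sum_k if blk k == b then
           \sum_(l | blk k == blk l) H k l else 0)); last first.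
  move=> b _; rewrite big_mkcond /=; apply: eq_bigr => k _.
  rewrite inE; case: eqP => // hk; apply: eq_bigl => l.
  by rewrite inE hk.
rewrite exchange_big /=; apply: eq_bigr => k _.
rewrite [RHS](bigD1 (Ordinal (hN k))) //= eqxx [X in _ = _ + X]big1 ?addr0 // => b neq.
case: eqP => // hb; case/negP: neq; apply/eqP/val_inj => /=.
by rewrite hb.
Qed.

Definition sq m (F : 'M[C]_m) := \sum_i \sum_j `|F i j| ^+ 2.

Lemma sq_ge0 m (F : 'M[C]_m) : 0 <= sq F.
Proof. by apply: sumr_ge0 => i _; apply: sumr_ge0 => j _; apply: exprn_ge0. Qed.

Lemma frob_le m (F G : 'M[C]_m) : (frob F <= frob G) = (sq F <= sq G).
Proof. by rewrite /frob ler_sqrtC // qualifE /= sq_ge0. Qed.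

Lemma block_opt d (blk : 'I_d -> nat) (At Xt Yt : 'M[C]_d) :
  (forall k l, (blk l < blk k)%N -> At k l = 0) ->
  (forall b, closest_stable_nonneg (blocksub At (blockset blk b))
                                   (blocksub Xt (blockset blk b))) ->
  (forall k l, (blk k < blk l)%N -> Xt k l = At k l) ->
  (forall k l, (blk l < blk k)%N -> Xt k l = 0) ->
  nonneg_mx Yt -> stable_mx Yt -> frob (Xt - At) <= frob (Yt - At).
Proof.
move=> lowA hb upX lowX nY sY.
pose N := (\max_k blk k).+1.
have hN k : (blk k < N)%N by rewrite ltnS (leq_bigmax k).
rewrite frob_le /sq.
pose HX k l := `|(Xt - At) k l| ^+ 2.
pose HY k l := `|(Yt - At) k l| ^+ 2.
have eX : \sum_i \sum_j `|(Xt - At) i j| ^+ 2 = \sum_k \sum_(l | blk k == blk l) HX k l.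
  apply: eq_bigr => k _; rewrite (bigID (fun l => blk k == blk l)) /=.
  rewrite [X in _ + X]big1 ?addr0 // => l hl.
  rewrite /HX !mxE; case: (ltngtP (blk k) (blk l)) => h.
  - by rewrite upX // subrr normr0 expr0n.
  - by rewrite lowX // lowA // subrr normr0 expr0n.
  - by rewrite h eqxx in hl.
have eY : \sum_k \sum_(l | blk k == blk l) HY k l <= \sum_i \sum_j `|(Yt - At) i j| ^+ 2.
  apply: ler_sum => k _; rewrite [X in _ <= X](bigID (fun l => blk k == blk l)) /=.
  by rewrite lerDl; apply: sumr_ge0 => l _; apply: exprn_ge0.
rewrite eX; apply: le_trans eY.
rewrite !(sum_blocks _ hN); apply: ler_sum => b _.
rewrite -!blk_sum.
have [_ _ opt] := hb b.
set S := blockset blk b.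
have nYb : nonneg_mx (blocksub Yt S) by move=> i j; rewrite mxE.
have := opt _ nYb (stable_principal (S:=S) nY sY).
rewrite frob_le /sq => h.
apply: le_trans (le_trans h _) => //.
  by apply: ler_sum => i _; apply: ler_sum => j _; rewrite /HX !mxE.
by apply: ler_sum => i _; apply: ler_sum => j _; rewrite /HY !mxE.
Qed.

End Blocks.
End Aux.
Import Aux.
Theorem lemma2 (C : numClosedFieldType) (d : nat) (A : 'M[C]_d) (s : 'S_d)
  (blk : 'I_d -> nat) (Xt : 'M[C]_d) :
  nonneg_mx A ->
  (forall k l : 'I_d, (k <= l)%N -> (blk k <= blk l)%N) ->
  let At := perm_mx s *m A *m (perm_mx s)^T in
  (forall k l : 'I_d, (blk l < blk k)%N -> At k l = 0) ->
  (forall b : nat, closest_stable_nonneg (blocksub At (blockset blk b))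
                                         (blocksub Xt (blockset blk b))) ->
  (forall k l : 'I_d, (blk k < blk l)%N -> Xt k l = At k l) ->
  (forall k l : 'I_d, (blk l < blk k)%N -> Xt k l = 0) ->
  closest_stable_nonneg A ((perm_mx s)^T *m Xt *m perm_mx s).
Proof.
move=> nA _ At lowA hb upX lowX.
have AtE : At = cj s A by rewrite /At /cj tr_perm_mx.
have XE : (perm_mx s)^T *m Xt *m perm_mx s = cj (s^-1)%g Xt.
  by rewrite /cj tr_perm_mx invgK.
have AE : A = cj (s^-1)%g At by rewrite AtE cjK.
rewrite XE; split.
- apply: nonneg_cj => k l.
  case: (ltngtP (blk k) (blk l)) => h.
  + by rewrite upX // AtE cj_entry; apply: nA.
  + by rewrite lowX.
  + pose S := blockset blk (blk k).
    have kS : k \in S by rewrite inE.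
    have lS : l \in S by rewrite inE h.
    have [nb _ _] := hb (blk k).
    have := nb (enum_rank_in kS k) (enum_rank_in kS l).
    by rewrite mxE !enum_rankK_in.
- apply: stable_cj; apply: (stable_blocktri lowX) => b.
  by have [_ ? _] := hb b.
- move=> Y nY sY.
  rewrite {1}AE -cjB frob_cj.
  rewrite -[Y](cjK s) AE -cjB frob_cj.
  apply: (block_opt lowA hb upX lowX); [exact: nonneg_cj | exact: stable_cj].
Qed.
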